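(* Let ${\cal F}$ be a nonprincipal filter on $\omega$, and for sequences $\hat s=\{s_n\}$ with $s_n\in(0,\tfrac12]$ let $\mu_{\hat s}$ denote the corresponding product measure on $2^\omega$. (1) If $\hat p,\hat q$ are such sequences with $p_n\le q_n$ for all but finitely many $n$, and $\mu_{\hat q}({\cal F})=0$, then $\mu_{\hat p}({\cal F})=0$. (2) If ${\cal F}$ is nonmeasurable with respect to both $\mu_{\hat p}$ and $\mu_{\hat q}$, and $r_n=\min\{p_n,q_n\}$ for $n\in\omega$, then ${\cal F}$ is $\mu_{\hat r}$-nonmeasurable.
   Context: Subsets of $\omega$ are identified with their characteristic functions, so filters on $\omega$ are subsets of $2^\omega$. For $\hat s=\{s_n:n\in\omega\}$ with $s_n\in(0,\tfrac12]$, $\mu_{\hat s}$ is the product measure on $2^\omega$ with $\mu_{\hat s}(\{x:x(n)=1\})=s_n$ and $\mu_{\hat s}(\{x:x(n)=0\})=1-s_n$. *)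

(* Defs.v *)
From HB Require Import structures.
From mathcomp Require Import all_boot all_order all_algebra.
From mathcomp Require Import all_classical all_reals all_analysis.
Set Implicit Arguments. Unset Strict Implicit. Unset Printing Implicit Defensive.
Import Order.TTheory GRing.Theory Num.Theory.
Local Open Scope classical_set_scope.
Local Open Scope ring_scope.

(* 2^omega = nat -> bool; subsets of omega are identified with their
   characteristic functions, so a filter on omega is a set (nat -> bool). *)

Definition is_filter_omega (F : set (nat -> bool)) : Prop :=
  F (fun _ => true) /\
  ~ F (fun _ => false) /\
  (forall x y : nat -> bool, F x -> (forall n, x n -> y n) -> F y) /\
  (forall x y : nat -> bool, F x -> F y -> F (fun n => x n && y n)).

Definition nonprincipal_filter (F : set (nat -> bool)) : Prop :=
  is_filter_omega F /\
  (forall x : nat -> bool, (exists N, forall n, (N <= n)%N -> x n) -> F x).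

Definition admissible (R : realType) (s : nat -> R) : Prop :=
  forall n, 0 < s n <= 2^-1.

Definition cyl (t : seq bool) : set (nat -> bool) :=
  [set x | forall i, (i < size t)%N -> x i = nth false t i].

Definition cyl_weight (R : realType) (s : nat -> R) (t : seq bool) : R :=
  \prod_(i < size t) (if nth false t i then s i else 1 - s i).

(* outer measure of the product measure mu_s (covers by countably many
   basic cylinders); its Caratheodory-measurable sets form the completion
   of the product measure mu_s on 2^omega *)
Definition prod_outer (R : realType) (s : nat -> R) (A : set (nat -> bool))
  : \bar R :=
  ereal_inf [set (\sum_(0 <= k <oo) ((cyl_weight s (c k))%:E))%E
            | c in [set c : nat -> seq bool | A `<=` \bigcup_k cyl (c k)]].

Definition prod_null (R : realType) (s : nat -> R) (A : set (nat -> bool)) :=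
  prod_outer s A = 0%E.

Definition prod_measurable (R : realType) (s : nat -> R)
  (A : set (nat -> bool)) : Prop :=
  caratheodory_measurable (prod_outer s) A.

(* Main.v *)
Require Import Defs.
From HB Require Import structures.
From mathcomp Require Import all_boot all_order all_algebra.
From mathcomp Require Import all_classical all_reals all_analysis.
From mathcomp Require Import ring lra.
Set Implicit Arguments. Unset Strict Implicit. Unset Printing Implicit Defensive.
Import Order.TTheory GRing.Theory Num.Theory.
Local Open Scope classical_set_scope.
Local Open Scope ring_scope.

Section Basic.
Variable R : realType.
Implicit Types s : nat -> R.

Definition prob01 s := forall n, 0 <= s n <= 1.

Definition fac (p : R) (b : bool) := if b then p else 1 - p.

Lemma fac_ge0 p b : 0 <= p <= 1 -> 0 <= fac p b.
Proof. by case/andP=> h0 h1; case: b => //=; rewrite subr_ge0. Qed.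

Lemma fac_le1 p b : 0 <= p <= 1 -> fac p b <= 1.
Proof. by case/andP=> h0 h1; case: b => //=; rewrite lerBlDr lerDl. Qed.

Definition sh s := fun n => s n.+1.

Lemma prob01_sh s : prob01 s -> prob01 (sh s).
Proof. by move=> h n; exact: h. Qed.

Lemma cyl_weight_nil s : cyl_weight s [::] = 1.
Proof. by rewrite /cyl_weight big_ord0. Qed.

Lemma cyl_weight_cons s b t :
  cyl_weight s (b :: t) = fac (s 0%N) b * cyl_weight (sh s) t.
Proof. by rewrite /cyl_weight /= big_ord_recl /=. Qed.

Lemma cyl_weight_ge0 s : prob01 s -> forall t, 0 <= cyl_weight s t.
Proof.
move=> hs t; elim: t s hs => [|b t IH] s hs; first by rewrite cyl_weight_nil.
rewrite cyl_weight_cons mulr_ge0 //; first exact: fac_ge0.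
exact/IH/prob01_sh.
Qed.

Lemma cyl_weight_le1 s : prob01 s -> forall t, cyl_weight s t <= 1.
Proof.
move=> hs t; elim: t s hs => [|b t IH] s hs; first by rewrite cyl_weight_nil.
rewrite cyl_weight_cons mulr_ile1 //; first exact: fac_ge0.
- exact/cyl_weight_ge0/prob01_sh.
- exact: fac_le1.
- exact/IH/prob01_sh.
Qed.

Fixpoint small s (K : nat) : seq bool :=
  if K is K'.+1 then (s 0%N <= 2^-1) :: small (sh s) K' else [::].

Lemma small_weight s K : prob01 s -> cyl_weight s (small s K) <= (2^-1) ^+ K.
Proof.
elim: K s => [|K IH] s hs /=; first by rewrite cyl_weight_nil expr0.
rewrite cyl_weight_cons exprS ler_pM //.
- exact: fac_ge0.
- exact/cyl_weight_ge0/prob01_sh.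
- rewrite /fac; case: ifPn => //; rewrite -ltNge => h.
  lra.
- exact/IH/prob01_sh.
Qed.

End Basic.

Section Outer.
Variable R : realType.
Local Open Scope ereal_scope.
Variable s : nat -> R.
Hypothesis hs : prob01 s.
Local Notation mu := (prod_outer s).
Local Notation w := (fun t => (cyl_weight s t)%:E).

Lemma w_ge0 t : 0 <= w t.
Proof. by rewrite lee_fin cyl_weight_ge0. Qed.

Lemma po_ge0 A : 0 <= mu A.
Proof.
apply: le_ereal_inf_tmp => _ [c _ <-]; apply: nneseries_ge0 => k _ _.
exact: w_ge0.
Qed.

Lemma po_le A B : A `<=` B -> mu A <= mu B.
Proof.
move=> AB; apply: ereal_inf_le_tmp => x [c Bc <-]; exists c => //.
exact: subset_trans Bc.
Qed.

Lemma po_cover A (c : nat -> seq bool) : A `<=` \bigcup_k cyl (c k) ->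
  mu A <= \sum_(k <oo) w (c k).
Proof. by move=> Ac; apply: ereal_inf_lbound; exists c. Qed.

Lemma po_sigma_sub (A : nat -> set (nat -> bool)) :
  mu (\bigcup_n A n) <= \sum_(i <oo) mu (A i).
Proof.
have [[i ioo]|] := pselect (exists i, mu (A i) = +oo).
  rewrite (eseries_pinfty _ _ ioo) ?leey// => n _.
  by rewrite -ltNye (lt_le_trans _ (po_ge0 _)).
rewrite -forallNE => Aoo.
suff add2e (e : {posnum R}) :
    mu (\bigcup_n A n) <= \sum_(i <oo) mu (A i) + e%:num%:E.
  by apply/lee_addgt0Pr => _/posnumP[].
rewrite (le_trans _ (epsilon_trick _ _ _))//; last by move=> n; exact: po_ge0.
pose P n (B : nat -> seq bool) := A n `<=` \bigcup_k cyl (B k) /\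
  \sum_(k <oo) w (B k) <= mu (A n) + (e%:num / (2 ^ n.+1)%:R)%:E.
have [G PG] : {G : (nat -> seq bool)^nat & forall n, P n (G n)}.
  apply: (@choice _ _ P) => n; rewrite /P /prod_outer.
  set S := (X in ereal_inf X); move infS : (ereal_inf S) => iS.
  case: iS infS => [r Sr|Soo|Soo].
  - have en1 : (0 < e%:num / (2 ^ n.+1)%:R)%R by [].
    have /(lb_ereal_inf_adherent en1) : ereal_inf S \is a fin_num by rewrite Sr.
    move=> [x [B AnB muBx] xS].
    by exists B; split => //; rewrite muBx -Sr; exact/ltW.
  - by have := Aoo n; rewrite /prod_outer Soo.
  - suff : lbound S 0 by move/le_ereal_inf_tmp; rewrite Soo.
    by move=> /= _ [B AnB <-]; apply: nneseries_ge0 => k _ _; exact: w_ge0.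
have muG_ge0 x : 0 <= (w \o uncurry G) x by exact: w_ge0.
apply: (@le_trans _ _ (\esum_(i in setT) (w \o uncurry G) i)).
  apply: ereal_inf_lbound => /=.
  have /card_esym/ppcard_eqP[f] := card_nat2.
  exists (uncurry G \o f).
    move=> t [i _] /((PG i).1) [j _ Gij].
    exists (f^-1%FUN (i, j)) => //=.
    by rewrite invK ?inE.
  rewrite -(esum_pred_image (w \o uncurry G) _ xpredT) ?[fun=> _]set_true//.
  by rewrite image_eq.
rewrite (_ : esum _ _ = \sum_(i <oo) \sum_(j <oo ) w (G i j)); last first.
  pose J : nat -> set (nat * nat) := fun i => [set (i, j) | j in setT].
  rewrite (_ : setT = \bigcup_k J k); last first.
    by rewrite predeqE => -[a b]; split => // _; exists a => //; exists b.
  rewrite esum_bigcupT /=; last 2 first.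
    - apply/trivIsetP => i j _ _ ij.
      rewrite predeqE => -[n m] /=; split => //= -[] [_] _ [<-{n} _].
      by move=> [m' _] [] /esym/eqP; rewrite (negbTE ij).
    - by move=> x; exact: w_ge0.
  rewrite -(image_id [set: nat]) -fun_true esum_pred_image//; last first.
    by move=> n _; apply: esum_ge0 => x _; exact: w_ge0.
  apply: eq_eseriesr => /= j _.
  rewrite -(esum_pred_image (w \o uncurry G) (pair j) predT)//=; last first.
    by move=> a b _ _ [].
    by move=> n _; exact: w_ge0.
  by congr esum; rewrite predeqE => -[a b]; split; move=> [i _ <-]; exists i.
apply: lee_lim.
- apply: is_cvg_nneseries => n *.
  by apply: nneseries_ge0 => m *; exact: (muG_ge0 (n, m)).
- by apply: is_cvg_nneseries => n *; apply: adde_ge0 => //; exact: po_ge0.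
- by near=> n; apply: lee_sum => i _; exact: (PG i).2.
Unshelve. all: by end_near. Qed.

End Outer.

Section Tiny.
Variable R : realType.

Lemma two_pow_bound (eps : R) : 0 < eps -> exists K, 2 <= eps * 2 ^+ K.
Proof.
move=> e0; set B := Num.bound (eps^-1); exists B.+1.
have hB : eps^-1 < B%:R by apply: archi_boundP; rewrite invr_ge0 ltW.
have h1 : 1 < eps * B%:R.
  have := mulfV (lt0r_neq0 e0); nra.
have h2 : (B.+1)%:R <= 2 ^+ B :> R.
  by rewrite -natrX ler_nat ltn_expl.
rewrite exprS mulrCA -[X in X <= _]mulr1 ler_pM2l // .
apply: (le_trans (ltW h1)); rewrite ler_pM2l //.
by apply: le_trans h2; rewrite ler_nat.
Qed.

Variable s : nat -> R.
Hypothesis hs : prob01 s.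

Lemma tiny (eps : R) : 0 < eps -> exists K,
  forall k, cyl_weight s (small s (k + K)) <= eps / (2 ^ k.+1)%:R.
Proof.
move=> e0; have [K hK] := two_pow_bound e0; exists K => k.
apply: (le_trans (small_weight _ hs)).
have p2 n : 0 < 2 ^+ n :> R by rewrite exprn_gt0.
rewrite exprVn natrX ler_pdivlMr ?p2 // mulrC.
rewrite ler_pdivrMr ?p2 //.
have -> : 2 ^+ k.+1 = 2 ^+ k * 2 :> R by rewrite exprSr.
by rewrite exprD mulrCA ler_pM2l ?p2.
Qed.
End Tiny.

Section ListCover.
Variable R : realType.
Local Open Scope ereal_scope.
Variable s : nat -> R.
Hypothesis hs : prob01 s.
Local Notation mu := (prod_outer s).
Local Notation w := (fun t => (cyl_weight s t)%:E).

Lemma po_list A (ts : seq (seq bool)) :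
  A `<=` (fun x => exists2 t, t \in ts & cyl t x) ->
  mu A <= (\sum_(t <- ts) cyl_weight s t)%:E.
Proof.
move=> hA; apply/lee_addgt0Pr => eps e0; have [K hK] := tiny hs e0.
pose c k := if (k < size ts)%N then nth [::] ts k else small s (k - size ts + K).
apply: le_trans (@po_cover _ s A c _) _.
  move=> x /hA [t tin xt]; exists (index t ts) => //.
  by rewrite /c index_mem tin nth_index.
rewrite (nneseries_split 0 (size ts)); last by move=> k _; have := w_ge0 hs (c k).
rewrite add0n; apply: leeD.
  rewrite sumEFin lee_fin (big_nth [::]).
  by rewrite le_eqVlt; apply/orP; left; apply/eqP; apply: eq_big_nat => k /andP[_ hk]; rewrite /c hk.
rewrite -nneseries_addn; last by move=> k; have := w_ge0 hs (c k).
apply: le_trans (epsilon_trick0 xpredT (ltW e0)).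
apply: lee_nneseries => [k _ _|k _]; first by have := w_ge0 hs (c (k + size ts)%N).
rewrite /c ltnNge leq_addl /= addnK lee_fin; exact: hK.
Qed.

Lemma po_cyl t : mu (cyl t) <= w t.
Proof.
apply: le_trans (po_list (ts := [:: t]) _) _; last by rewrite big_seq1.
by move=> x xt; exists t => //; rewrite mem_seq1.
Qed.

Lemma po0 : mu set0 = 0.
Proof.
apply/le_anti/andP; split; last by have := po_ge0 hs set0.
by apply: le_trans (po_list (ts := [::]) _) _; rewrite ?big_nil.
Qed.

Lemma po_setT : mu setT <= 1.
Proof.
have -> : setT = cyl [::] :> set _ by apply/seteqP; split => x // _ i.
by have := po_cyl [::]; rewrite cyl_weight_nil.
Qed.

Lemma po_union A B : mu (A `|` B) <= mu A + mu B.
Proof.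
pose F n := if n is 0 then A else if n is 1 then B else set0.
have -> : A `|` B = \bigcup_n F n.
  apply/seteqP; split => [x [xA|xB]|x [n _]]; first by exists 0%N.
    by exists 1%N.
  by case: n => [|[|n]] /= h; [left|right|].
apply: le_trans (po_sigma_sub hs F) _.
rewrite (nneseries_split 0 2); last by move=> k _; have := po_ge0 hs (F k).
rewrite add0n big_nat_recr // big_nat_recr // big_nil /= add0r.
rewrite -nneseries_addn; last by move=> k; have := po_ge0 hs (F k).
rewrite eseries0 ?adde0 // => k _ _; rewrite addn2 /=; exact: po0.
Qed.

End ListCover.

Fixpoint incyl (t : seq bool) (x : nat -> bool) : bool :=
  if t is b :: t' then (x 0%N == b) && incyl t' (fun i => x i.+1) else true.

Lemma incylP t x : reflect (cyl t x) (incyl t x).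
Proof.
elim: t x => [|b t IH] x /=; first by apply: ReflectT => i.
apply: (iffP andP) => [[/eqP h0 /IH h] [|i] /= hi //|h]; first exact: h.
split; first by apply/eqP; exact: (h 0%N).
by apply/IH => i hi; exact: (h i.+1).
Qed.

Definition consf (b : bool) (x : nat -> bool) : nat -> bool :=
  fun i => if i is j.+1 then x j else b.
Definition ext (u : seq bool) : nat -> bool := fun i => nth false u i.

Lemma ext_cons b u : ext (b :: u) = consf b (ext u).
Proof. by apply: funext => -[|i]. Qed.

Lemma consf_eta x : consf (x 0%N) (fun i => x i.+1) = x.
Proof. by apply: funext => -[|i]. Qed.

Definition detL (L : nat) (D : set (nat -> bool)) :=
  forall x y, (forall i, (i < L)%N -> x i = y i) -> D x -> D y.

Lemma incyl_det t x y : (forall i, (i < size t)%N -> x i = y i) ->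
  incyl t x = incyl t y.
Proof.
elim: t x y => [|b t IH] x y //= h.
by rewrite (h 0%N) // (IH _ (fun i => y i.+1)) // => i hi; apply: h.
Qed.

Section Ex.
Variable R : realType.
Implicit Types s : nat -> R.

Fixpoint Ex s (L : nat) (f : seq bool -> R) : R :=
  if L is L'.+1 then
    s 0%N * Ex (sh s) L' (fun u => f (true :: u)) +
    (1 - s 0%N) * Ex (sh s) L' (fun u => f (false :: u))
  else f [::].

Lemma Ex_ext s L f g : (forall u, size u = L -> f u = g u) -> Ex s L f = Ex s L g.
Proof.
elim: L s f g => [|L IH] s f g h /=; first by apply: h.
by rewrite (IH _ _ (fun u => g (true :: u))) ?(IH _ (fun u => f (false :: u)) (fun u => g (false :: u))) // => u hu; apply: h => /=; rewrite hu.
Qed.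

Lemma Ex_const s L c : Ex s L (fun _ => c) = c.
Proof. by elim: L s => [|L IH] s //=; rewrite !IH; ring. Qed.

Lemma Ex_add s L f g : Ex s L (fun u => f u + g u) = Ex s L f + Ex s L g.
Proof. by elim: L s f g => [|L IH] s f g //=; rewrite !IH; ring. Qed.

Lemma Ex_scale s L (c : R) f : Ex s L (fun u => c * f u) = c * Ex s L f.
Proof. by elim: L s f => [|L IH] s f //=; rewrite !IH; ring. Qed.

Lemma Ex_opp s L f : Ex s L (fun u => - f u) = - Ex s L f.
Proof.
rewrite -mulN1r -Ex_scale; apply: Ex_ext => u _; by rewrite mulN1r.
Qed.

Lemma Ex_sub s L f g : Ex s L (fun u => f u - g u) = Ex s L f - Ex s L g.
Proof. by rewrite Ex_add Ex_opp. Qed.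

Lemma Ex_sum s L (M : nat) (F : nat -> seq bool -> R) :
  Ex s L (fun u => \sum_(k < M) F k u) = \sum_(k < M) Ex s L (F k).
Proof.
elim: M => [|M IH].
  rewrite big_ord0; transitivity (Ex s L (fun _ => 0)); last exact: Ex_const.
  by apply: Ex_ext => u _; rewrite big_ord0.
rewrite big_ord_recr /= -IH -Ex_add; apply: Ex_ext => u _; by rewrite big_ord_recr.
Qed.

Lemma Ex_mono s L f g : prob01 s -> (forall u, size u = L -> f u <= g u) ->
  Ex s L f <= Ex s L g.
Proof.
elim: L s f g => [|L IH] s f g hs h /=; first by apply: h.
have h0 := hs 0%N; case/andP: h0 => h0 h1.
apply: lerD; apply: ler_wpM2l.
- exact: h0.
- by apply: IH => [|u hu]; [exact: prob01_sh|apply: h => /=; rewrite hu].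
- by rewrite subr_ge0.
- by apply: IH => [|u hu]; [exact: prob01_sh|apply: h => /=; rewrite hu].
Qed.

Lemma Ex_lift s L k f : Ex s (L + k) (fun u => f (take L u)) = Ex s L f.
Proof.
elim: L s f => [|L IH] s f /=.
  by rewrite add0n -(Ex_const s k (f [::])); apply: Ex_ext => u _; rewrite take0.
by rewrite -!IH.
Qed.

Lemma Ex_cyl s L t : (size t <= L)%N ->
  Ex s L (fun u => (incyl t (ext u))%:R) = cyl_weight s t.
Proof.
elim: t s L => [|b t IH] s L /=.
  by move=> _; rewrite cyl_weight_nil (Ex_const s L 1).
case: L => [//|L] /= hL; rewrite cyl_weight_cons.
have e1 b' : (fun u => ((ext (b' :: u) 0%N == b) && incyl t (fun i => ext (b' :: u) i.+1))%:R)
   = (fun u => (b' == b)%:R * (incyl t (ext u))%:R :> R).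
  by apply: funext => u /=; case: (b' == b); rewrite ?mul1r ?mul0r.
rewrite !e1 !Ex_scale IH //.
by clear e1; case: b => /=; rewrite ?mul1r ?mul0r ?mulr0 ?addr0 ?add0r.
Qed.

End Ex.

Section Cons.
Variable R : realType.
Local Open Scope ereal_scope.

Lemma po_cons (s : nat -> R) (hs : prob01 s) b (D : set (nat -> bool)) :
  prod_outer s [set z | z 0%N = b /\ D (fun i => z i.+1)] <=
  (fac (s 0%N) b)%:E * prod_outer (sh s) D.
Proof.
set A := [set z | _].
have hs' := prob01_sh hs.
have key c : D `<=` \bigcup_k cyl (c k) ->
    prod_outer s A <= (fac (s 0%N) b)%:E * \sum_(k <oo) (cyl_weight (sh s) (c k))%:E.
  move=> Dc; apply: le_trans (@po_cover _ s A (fun k => b :: c k) _) _.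
    move=> z [z0 /Dc [k _ hk]]; exists k => //; move=> [|i] /= hi; first by [].
    exact: hk.
  rewrite -nneseriesZl; last by move=> k _; have := w_ge0 hs' (c k).
  apply: lee_nneseries => [k _ _|k _]; first by have := w_ge0 hs (b :: c k).
  by rewrite cyl_weight_cons EFinM.
have hf := fac_ge0 b (hs 0%N).
have [f0|fpos] := eqVneq (fac (s 0%N) b) 0%R.
  rewrite f0 mul0e; have := key (fun _ => [::]); rewrite f0 mul0e; apply.
  by move=> y _; exists 0%N => // i.
have fp : (0 < fac (s 0%N) b)%R by rewrite lt_neqAle eq_sym fpos hf.
rewrite -lee_pdivrMl //; apply: le_ereal_inf_tmp => e [c Dc <-].
by rewrite lee_pdivrMl //; exact: key.
Qed.

Lemma Ex_outer L : forall (s : nat -> R), prob01 s -> forall D, detL L D ->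
  prod_outer s D <= (Ex s L (fun u => (`[< D (ext u) >])%:R))%:E.
Proof.
elim: L => [|L IH] s hs D hD /=.
  case: (pselect (D (ext [::]))) => h.
    rewrite asboolT //; apply: le_trans (po_setT hs); exact: po_le.
  rewrite asboolF //; apply: le_trans (_ : prod_outer s set0 <= _); last by rewrite po0.
  apply: po_le => x Dx; apply: h; apply: hD Dx => i //.
pose Db b := [set y | D (consf b y)].
have hDb b : detL L (Db b).
  move=> x y hxy; rewrite /Db /=; apply: hD => -[|i] //= hi; exact: hxy.
have hs' := prob01_sh hs.
have hsub : D `<=` [set z | z 0%N = true /\ Db true (fun i => z i.+1)] `|`
                   [set z | z 0%N = false /\ Db false (fun i => z i.+1)].
  move=> z Dz; rewrite /Db /=; case hz: (z 0%N); [left|right];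
    by split => //; rewrite -hz consf_eta.
apply: le_trans (po_le s hsub) _; apply: le_trans (po_union hs _ _) _.
have eb b : (fun u => (`[< D (ext (b :: u)) >])%:R) =
            (fun u => (`[< Db b (ext u) >])%:R :> R).
  by apply: funext => u; rewrite ext_cons.
rewrite eb eb EFinD !EFinM; apply: leeD.
- apply: le_trans (po_cons hs true (Db true)) _.
  by apply: lee_wpmul2l; [rewrite lee_fin; case/andP: (hs 0%N)|exact: IH].
- apply: le_trans (po_cons hs false (Db false)) _.
  apply: lee_wpmul2l; last exact: IH.
  by rewrite lee_fin subr_ge0; case/andP: (hs 0%N).
Qed.

End Cons.

Section ML.
Variable R : realType.
Variable s : nat -> R.
Hypothesis hs : prob01 s.
Variables (c : nat -> R) (t : nat -> seq bool) (th : R).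
Hypotheses (hc : forall k, 0 <= c k) (hth : 0 < th).

Definition Sm N x := \sum_(k < N) c k * (incyl (t k) x)%:R.
Definition Em N := [set x | th < Sm N x].
Definition Lm N := (\max_(k < N) size (t k))%N.

Lemma Lm_mono N : (Lm N <= Lm N.+1)%N.
Proof. by rewrite /Lm big_ord_recr /= leq_maxl. Qed.

Lemma Lm_monoD N k : (Lm N <= Lm (N + k))%N.
Proof.
elim: k => [|k IH]; first by rewrite addn0.
by apply: (leq_trans IH); rewrite addnS; exact: Lm_mono.
Qed.

Lemma size_le_Lm k N : (k < N)%N -> (size (t k) <= Lm N)%N.
Proof. by move=> hk; have := @leq_bigmax _ (fun i : 'I_N => size (t i)) (Ordinal hk). Qed.

Lemma Sm_ge0 N x : 0 <= Sm N x.
Proof. by apply: sumr_ge0 => k _; apply: mulr_ge0. Qed.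

Lemma Sm_det N x y : (forall i, (i < Lm N)%N -> x i = y i) -> Sm N x = Sm N y.
Proof.
move=> h; apply: eq_bigr => k _; rewrite (@incyl_det _ x y) // => i hi.
by apply: h; apply: leq_trans hi (size_le_Lm (ltn_ord k)).
Qed.

Lemma Em_detL N L : (Lm N <= L)%N -> detL L (Em N).
Proof.
move=> hL x y h; rewrite /Em /= (@Sm_det N x y) // => i hi; apply: h.
exact: leq_trans hi hL.
Qed.

Lemma Sm_mono N x : Sm N x <= Sm N.+1 x.
Proof. by rewrite /Sm big_ord_recr /= lerDl mulr_ge0. Qed.

Lemma Em_sub N : Em N `<=` Em N.+1.
Proof. move=> x; rewrite /Em /= => h; exact: lt_le_trans h (Sm_mono _ _). Qed.

Definition mass N := Ex s (Lm N) (fun u => ((th < Sm N (ext u))%R)%:R).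

Lemma ext_take L u i : (i < L)%N -> ext u i = ext (take L u) i.
Proof. by move=> hi; rewrite /ext nth_take. Qed.

Lemma mass_lift N k : Ex s (Lm N + k) (fun u => ((th < Sm N (ext u))%R)%:R) = mass N.
Proof.
rewrite /mass -(Ex_lift s (Lm N) k); apply: Ex_ext => u _.
by rewrite (@Sm_det N (ext u) (ext (take (Lm N) u))) // => i; exact: ext_take.
Qed.

Lemma mass0 : mass 0 = 0.
Proof. by rewrite /mass /Lm big_ord0 /= /Sm big_ord0 ltNge ltW. Qed.

Lemma mu_D N : (prod_outer s (Em N.+1 `\` Em N) <= (mass N.+1 - mass N)%:E)%E.
Proof.
have hL := Lm_mono N.
apply: le_trans (Ex_outer hs (D := Em N.+1 `\` Em N) _) _.
  move=> x y h [h1 h2]; split; first exact: (@Em_detL N.+1 (Lm N.+1) (leqnn _) x y h h1).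
  move=> h3; apply: h2; apply: (@Em_detL N (Lm N.+1) hL y x) h3.
  by move=> i hi; symmetry; apply: h hi.
rewrite lee_fin le_eqVlt; apply/orP; left; apply/eqP.
rewrite -(mass_lift N (Lm N.+1 - Lm N)) (subnKC hL) /mass -Ex_sub; apply: Ex_ext => u _.
rewrite /Em /setD /=.
case: (boolP (th < Sm N (ext u))) => h.
  rewrite (lt_le_trans h (Sm_mono _ _)) subrr asboolF //; by case.
rewrite subr0; case: (boolP (th < Sm N.+1 (ext u))) => h'.
  by rewrite asboolT //; split => //; apply/negP.
by rewrite asboolF //; case.
Qed.

Lemma mass_bound M : th * mass M <= \sum_(k < M) c k * cyl_weight s (t k).
Proof.
rewrite /mass -Ex_scale.
apply: le_trans (Ex_mono (g := fun u => Sm M (ext u)) hs _) _.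
  move=> u _; case: (boolP (th < Sm M (ext u))%R) => h /=; rewrite ?mulr1 ?mulr0; [exact: ltW | exact: Sm_ge0].
rewrite le_eqVlt; apply/orP; left; apply/eqP.
rewrite /Sm (Ex_sum s (Lm M) M (fun k u => c k * (incyl (t k) (ext u))%:R)); apply: eq_bigr => k _; rewrite Ex_scale Ex_cyl //.
exact: size_le_Lm.
Qed.

Local Open Scope ereal_scope.

Theorem ML : th%:E * prod_outer s [set x | exists N, Em N x] <=
  \sum_(k <oo) (c k * cyl_weight s (t k))%:E.
Proof.
have hcover : [set x | exists N, Em N x] `<=` \bigcup_N (Em N.+1 `\` Em N).
  move=> x hx.
  have ex : exists N, (fun N => (th < Sm N x)%R) N by case: hx => N hN; exists N.
  case: (ex_minnP ex) => m hm hmin.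
  case: m hm hmin => [|m] hm hmin.
    by move: hm; rewrite /Sm big_ord0 ltNge ltW.
  exists m => //; split => //; rewrite /Em /= => h.
  by have := hmin _ h; rewrite ltnn.
have hser0 k : 0 <= (c k * cyl_weight s (t k))%:E.
  by rewrite lee_fin mulr_ge0 // cyl_weight_ge0.
set S := \sum_(k <oo) _.
have hS : \sum_(N <oo) prod_outer s (Em N.+1 `\` Em N) <= th^-1%:E * S.
  apply: lime_le; first by apply: is_cvg_nneseries => n _ _; exact: po_ge0.
  apply: nearW => M /=.
  apply: le_trans (_ : \sum_(0 <= N < M) (mass N.+1 - mass N)%:E <= _).
    by apply: lee_sum => N _; exact: mu_D.
  rewrite sumEFin telescope_sumr // mass0 subr0.
  apply: le_trans (_ : (th^-1 * \sum_(k < M) c k * cyl_weight s (t k))%:E <= _).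
    rewrite lee_fin ler_pdivlMl //; exact: mass_bound.
  rewrite EFinM; apply: lee_wpmul2l; first by rewrite lee_fin invr_ge0 ltW.
  apply: le_trans (_ : \sum_(0 <= k < M) (c k * cyl_weight s (t k))%:E <= _).
    by rewrite sumEFin big_mkord.
  exact: nneseries_lim_ge.
apply: le_trans (_ : th%:E * (th^-1%:E * S) <= _).
  apply: lee_wpmul2l; first by rewrite lee_fin ltW.
  apply: le_trans hS; apply: le_trans (po_le s hcover) _.
  exact: po_sigma_sub.
by rewrite muleA -EFinM mulfV ?gt_eqF // mul1e.
Qed.

End ML.

Fixpoint inter {X : Type} (a b : nat -> X) (n : nat) : X :=
  if n is n'.+1 then inter b (fun k => a k.+1) n' else a 0%N.

Definition ev {X : Type} (z : nat -> X) := fun i => z (i.*2).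
Definition od {X : Type} (z : nat -> X) := fun i => z (i.*2).+1.

Lemma inter_even {X} (a b : nat -> X) i : inter a b (i.*2) = a i.
Proof. by elim: i a b => [|i IH] a b //=; rewrite IH. Qed.

Lemma inter_odd {X} (a b : nat -> X) i : inter a b (i.*2).+1 = b i.
Proof. by rewrite /= inter_even. Qed.

Lemma ev_inter {X} (a b : nat -> X) : ev (inter a b) = a.
Proof. by apply: funext => i; rewrite /ev inter_even. Qed.

Lemma od_inter {X} (a b : nat -> X) : od (inter a b) = b.
Proof. by apply: funext => i; rewrite /od inter_odd. Qed.

Fixpoint evl (t : seq bool) : seq bool :=
  if t is x :: t' then x :: odl t' else [::]
with odl (t : seq bool) : seq bool :=
  if t is x :: t' then evl t' else [::].

Lemma incyl_inter t (a b : nat -> bool) :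
  incyl t (inter a b) = incyl (evl t) a && incyl (odl t) b.
Proof.
elim: t a b => [|x t IH] a b //=.
rewrite (IH b (fun k => a k.+1)) /=.
by case: (a 0%N == x) => //=; rewrite andbC.
Qed.

Section Inter.
Variable R : realType.

Lemma prob01_inter (a b : nat -> R) : prob01 a -> prob01 b -> prob01 (inter a b).
Proof.
move=> ha hb n; elim: n a b ha hb => [|n IH] a b ha hb //=.
exact: IH (prob01_sh ha).
Qed.

Lemma weight_inter t (a b : nat -> R) :
  cyl_weight (inter a b) t = cyl_weight a (evl t) * cyl_weight b (odl t).
Proof.
elim: t a b => [|x t IH] a b /=; first by rewrite !cyl_weight_nil mulr1.
rewrite !cyl_weight_cons.
have -> : sh (inter a b) = inter b (sh a) by [].
by rewrite IH /=; ring.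
Qed.

End Inter.

Definition shf {X} (f : nat -> X) := fun i => f i.+1.
Definition Phi (f : nat -> bool -> bool -> bool) (z : nat -> bool) : nat -> bool :=
  fun i => f i (z (i.*2)) (z (i.*2).+1).

Section Push.
Variable R : realType.

Definition pf (p q : R) (g : bool -> bool -> bool) : R :=
  fac p true * fac q true * (g true true)%:R + fac p true * fac q false * (g true false)%:R
  + fac p false * fac q true * (g false true)%:R + fac p false * fac q false * (g false false)%:R.

Lemma pf_fac p q g beta : fac (pf p q g) beta =
  fac p true * (fac q true * (g true true == beta)%:R) +
  fac p true * (fac q false * (g true false == beta)%:R) +
  (fac p false * (fac q true * (g false true == beta)%:R) +
  fac p false * (fac q false * (g false false == beta)%:R)).
Proof.
rewrite /pf /fac; case: beta; case: (g true true); case: (g true false);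
  case: (g false true); case: (g false false) => /=; ring.
Qed.

Local Open Scope ereal_scope.

Lemma push_cyl (t : seq bool) : forall (f : nat -> bool -> bool -> bool) (a b s : nat -> R),
  prob01 a -> prob01 b -> (forall i, s i = pf (a i) (b i) (f i)) ->
  prod_outer (inter a b) [set z | incyl t (Phi f z)] <= (cyl_weight s t)%:E.
Proof.
elim: t => [|beta t IH] f a b s ha hb hs.
  rewrite cyl_weight_nil; apply: le_trans (po_setT (prob01_inter ha hb)); exact: po_le.
have hab := prob01_inter ha hb.
pose Q (x y : bool) := if f 0%N x y == beta then [set z | incyl t (Phi (shf f) z)] else set0.
pose A (x y : bool) := [set z : nat -> bool | z 0%N = x /\
   [set w : nat -> bool | w 0%N = y /\ Q x y (fun i => w i.+1)] (fun i => z i.+1)].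
have hsub : [set z | incyl (beta :: t) (Phi f z)] `<=`
    (A true true `|` A true false) `|` (A false true `|` A false false).
  move=> z /= /andP[/eqP h1 h2].
  have hz : forall x y, z 0%N = x -> z 1%N = y -> A x y z.
    have h1' : f 0%N (z 0%N) (z 1%N) = beta := h1.
    move=> x y hx hy; split => //; split => //; rewrite /Q -hx -hy h1' eqxx /=.
    exact: h2.
  case h0: (z 0%N); case h1': (z 1%N);
    [left;left|left;right|right;left|right;right]; exact: hz.
have hA x y : prod_outer (inter a b) (A x y) <=
    (fac (a 0%N) x * (fac (b 0%N) y * ((f 0%N x y == beta)%:R * cyl_weight (sh s) t)))%:E.
  apply: le_trans (po_cons hab x _) _.
  rewrite !EFinM; apply: lee_wpmul2l; first by rewrite lee_fin fac_ge0.
  have hba := prob01_inter hb (prob01_sh ha).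
  apply: le_trans (po_cons hba y _) _.
  apply: lee_wpmul2l; first by rewrite lee_fin fac_ge0.
  rewrite /Q; case: (f 0%N x y == beta) => /=.
    rewrite mul1e; apply: (IH (shf f) (sh a) (sh b) (sh s)).
    - exact: prob01_sh.
    - exact: prob01_sh.
    - by move=> i; exact: hs.
  rewrite mul0e; change (prod_outer (inter (sh a) (sh b)) set0 <= 0%:E).
  by rewrite (po0 (prob01_inter (prob01_sh ha) (prob01_sh hb))).
apply: le_trans (po_le _ hsub) _.
apply: le_trans (po_union hab _ _) _.
apply: le_trans (leeD (po_union hab _ _) (po_union hab _ _)) _.
apply: le_trans (leeD (leeD (hA true true) (hA true false)) (leeD (hA false true) (hA false false))) _.
rewrite -!EFinD lee_fin cyl_weight_cons (hs 0%N) pf_fac.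
rewrite le_eqVlt; apply/orP; left; apply/eqP; ring.
Qed.

Lemma push (f : nat -> bool -> bool -> bool) (a b s : nat -> R) :
  prob01 a -> prob01 b -> (forall i, s i = pf (a i) (b i) (f i)) ->
  forall S, prod_outer (inter a b) [set z | S (Phi f z)] <= prod_outer s S.
Proof.
move=> ha hb hs S; apply: le_ereal_inf_tmp => _ [c Sc <-].
have hab := prob01_inter ha hb.
apply: le_trans (_ : prod_outer (inter a b) (\bigcup_k [set z | incyl (c k) (Phi f z)]) <= _).
  apply: po_le => z /Sc [k _ hk]; exists k => //; exact/incylP.
apply: le_trans (po_sigma_sub hab _) _.
apply: lee_nneseries => [k _ _|k _]; first by have := po_ge0 hab [set z | incyl (c k) (Phi f z)].
exact: push_cyl.
Qed.

End Push.

Lemma cyl_open (t : seq bool) : @open cantor_space (cyl t).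
Proof.
pose C n : set cantor_space := [set x | forall i, (i < n)%N -> x i = nth false t i].
suff : forall n, open (C n) by move/(_ (size t)).
elim => [|n IH].
  have -> : C 0%N = setT by apply/seteqP; split => x // _ i.
  exact: openT.
have -> : C n.+1 = C n `&` (@proj nat (fun _ => bool) n @^-1` [set nth false t n]).
  apply/seteqP; split => x.
    by move=> h; split; [move=> i hi; apply: h; exact: ltnW| exact: h].
  move=> [h1 h2] i; rewrite ltnS leq_eqVlt => /orP[/eqP ->|hi]; [exact: h2|exact: h1].
apply: openI => //; apply: open_comp; last exact: discrete_open.
by move=> x _; exact: proj_continuous.
Qed.

Lemma finite_cover (c : nat -> seq bool) : setT `<=` \bigcup_k cyl (c k) ->
  exists N, forall x : nat -> bool, exists2 k, (k < N)%N & cyl (c k) x.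
Proof.
move=> hc.
have := cantor_space_compact; rewrite compact_cover => /(_ nat setT (fun k => cyl (c k))).
case.
- by move=> k _; exact: cyl_open.
- by move=> x _; have [k _ hk] := hc x I; exists k.
move=> D _ hD; exists (\max_(k <- finmap.enum_fset D) k).+1 => x.
have [k kD hk] := hD x I; exists k => //.
by rewrite ltnS; apply: (@leq_bigmax_seq _ _ xpredT (fun k => k)).
Qed.

Section Ge1.
Variable R : realType.
Variable s : nat -> R.
Hypothesis hs : prob01 s.

Lemma finite_sum_ge1 (c : nat -> seq bool) N :
  (forall x : nat -> bool, exists2 k, (k < N)%N & cyl (c k) x) ->
  1 <= \sum_(k < N) cyl_weight s (c k).
Proof.
move=> h; pose L := (\max_(k < N) size (c k))%N.
have hL k : (k < N)%N -> (size (c k) <= L)%N.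
  by move=> hk; have := @leq_bigmax _ (fun i : 'I_N => size (c i)) (Ordinal hk).
rewrite -(Ex_const s L 1).
have -> : \sum_(k < N) cyl_weight s (c k) =
    Ex s L (fun u => \sum_(k < N) (incyl (c k) (ext u))%:R).
  rewrite (Ex_sum s L N (fun k u => (incyl (c k) (ext u))%:R)).
  by apply: eq_bigr => k _; rewrite Ex_cyl // hL.
apply: Ex_mono => // u _.
have [k hk hx] := h (ext u).
rewrite (bigD1 (Ordinal hk)) //= (introT (incylP _ _) hx) lerDl.
by apply: sumr_ge0 => i _; rewrite ler0n.
Qed.

Local Open Scope ereal_scope.

Lemma po_setT_eq : prod_outer s setT = 1.
Proof.
apply/le_anti/andP; split; first exact: po_setT.
apply: le_ereal_inf_tmp => _ [c hc <-].
have [N hN] := finite_cover hc.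
apply: le_trans (_ : (\sum_(k < N) cyl_weight s (c k))%:E <= _).
  by rewrite lee_fin; exact: finite_sum_ge1.
rewrite -sumEFin -(big_mkord xpredT (fun k => (cyl_weight s (c k))%:E)).
by apply: nneseries_lim_ge => k _ _; rewrite lee_fin cyl_weight_ge0.
Qed.

End Ge1.

Section Fub.
Variable R : realType.

Lemma exists_partial (u : nat -> R) (hu : forall k, 0 <= u k) (th : R) :
  (th%:E < \sum_(k <oo) (u k)%:E)%E -> exists N, th < \sum_(k < N) u k.
Proof.
move=> h; apply/not_existsP => hn; move: h; apply/negP; rewrite -leNgt.
apply: lime_le; first by apply: is_cvg_nneseries => n _ _; rewrite lee_fin.
apply: nearW => N /=; rewrite sumEFin lee_fin big_mkord.
by have := hn N; rewrite ltNge => /negP; rewrite negbK.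
Qed.

Lemma lim_theta (al be m : R) : 0 <= al -> 0 < be ->
  (forall th, 0 < th -> th < be -> th * al <= m) -> be * al <= m.
Proof.
move=> ha hb h.
have hm : 0 <= m.
  apply: le_trans (h (be / 2) _ _); [by rewrite mulr_ge0 // divr_ge0 // ltW| |]; lra.
case: (leP (be * al) m) => // hlt.
have al0 : 0 < al.
  rewrite lt_neqAle ha andbT; apply/eqP => al0; move: hlt; rewrite -al0 mulr0; lra.
pose th := (m / al + be) / 2.
have hmal : m / al < be by rewrite ltr_pdivrMr.
have := h th _ _; rewrite /th.
have -> : (m / al + be) / 2 * al = (m + be * al) / 2.
  by field; rewrite gt_eqF.
move=> hh; have : (m + be * al) / 2 <= m.
  apply: hh.
  - apply: divr_gt0 => //; apply: ltr_pwDr => //; exact: divr_ge0.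
  - lra.
lra.
Qed.

Local Open Scope ereal_scope.

Theorem fub (a b : nat -> R) (ha : prob01 a) (hb : prob01 b) (A B : set (nat -> bool)) :
  prod_outer a A * prod_outer b B <= prod_outer (inter a b) [set z | A (ev z) /\ B (od z)].
Proof.
set AB := [set z | _ /\ _].
have hab := prob01_inter ha hb.
have claim : forall th : R, (0 < th)%R -> th%:E < prod_outer b B ->
    th%:E * prod_outer a A <= prod_outer (inter a b) AB.
  move=> th th0 thB; apply: le_ereal_inf_tmp => _ [c hc <-].
  pose cc k := cyl_weight b (odl (c k)).
  pose tt k := evl (c k).
  have hcc k : (0 <= cc k)%R by exact: cyl_weight_ge0.
  have hA : A `<=` [set x | exists N, Em cc tt th N x].
    move=> x Ax.
    pose Q k := if incyl (tt k) x then cyl (odl (c k)) else set0.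
    have hB : B `<=` \bigcup_k Q k.
      move=> y By.
      have : AB (inter x y) by rewrite /AB /= ev_inter od_inter.
      move/hc => [k _ /incylP]; rewrite incyl_inter => /andP[h1 h2].
      by exists k => //; rewrite /Q h1; exact/incylP.
    have hBle : prod_outer b B <= \sum_(k <oo) ((incyl (tt k) x)%:R * cc k)%:E.
      apply: le_trans (po_le _ hB) _; apply: le_trans (po_sigma_sub hb _) _.
      apply: lee_nneseries.
        by move=> k _ _; have := po_ge0 hb (Q k).
      move=> k _; rewrite /Q; case: (incyl (tt k) x).
        by rewrite mul1r; exact: po_cyl.
      by rewrite mul0r po0.
    have hu : forall k, (0 <= (incyl (tt k) x)%:R * cc k)%R.
      by move=> k; rewrite mulr_ge0 // ler0n.
    have [N hN] := exists_partial hu (lt_le_trans thB hBle).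
    exists N; rewrite /Em /Sm /=; apply: lt_le_trans hN _.
    by rewrite le_eqVlt; apply/orP; left; apply/eqP; apply: eq_bigr => k _; rewrite mulrC.
  apply: le_trans (_ : th%:E * prod_outer a [set x | exists N, Em cc tt th N x] <= _).
    by apply: lee_wpmul2l; [rewrite lee_fin ltW|exact: po_le].
  apply: le_trans (ML ha tt hcc th0) _.
  rewrite le_eqVlt; apply/orP; left; apply/eqP; apply: eq_eseriesr => k _.
  by rewrite weight_inter mulrC.
have fa : prod_outer a A \is a fin_num.
  by rewrite ge0_fin_numE ?po_ge0 // (le_lt_trans (po_le _ (subsetT A)) ) // (le_lt_trans (po_setT ha)) // ltry.
have fb : prod_outer b B \is a fin_num.
  by rewrite ge0_fin_numE ?po_ge0 // (le_lt_trans (po_le _ (subsetT B)) ) // (le_lt_trans (po_setT hb)) // ltry.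
have fm : prod_outer (inter a b) AB \is a fin_num.
  by rewrite ge0_fin_numE ?po_ge0 // (le_lt_trans (po_le _ (subsetT AB)) ) // (le_lt_trans (po_setT hab)) // ltry.
rewrite -(fineK fa) -(fineK fb) -(fineK fm) -EFinM lee_fin mulrC.
have hb0 : (0 <= fine (prod_outer b B))%R by rewrite fine_ge0 // po_ge0.
case: (eqVneq (fine (prod_outer b B)) 0%R) => [->|hbne].
  by rewrite mul0r fine_ge0 // po_ge0.
apply: lim_theta.
- by rewrite fine_ge0 // po_ge0.
- by rewrite lt_neqAle eq_sym hbne.
move=> th th0 thb.
have := claim th th0; rewrite -(fineK fb) lte_fin => /(_ thb).
by rewrite -(fineK fa) -(fineK fm) -EFinM lee_fin.
Qed.

End Fub.

Section Filt.
Variable F : set (nat -> bool).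
Hypothesis hF : nonprincipal_filter F.

Lemma F_up (x y : nat -> bool) : F x -> (forall n, x n -> y n) -> F y.
Proof. by case: hF => -[_ [_ [h _]]] _; exact: h. Qed.

Lemma F_meet (x y : nat -> bool) : F x -> F y -> F (fun n => x n && y n).
Proof. by case: hF => -[_ [_ [_ h]]] _; exact: h. Qed.

Lemma F_tail (N : nat) (x y : nat -> bool) : F x -> (forall n, (N <= n)%N -> x n -> y n) -> F y.
Proof.
move=> Fx h.
have Fc : F (fun n => (N <= n)%N) by case: hF => _ h'; apply: h'; exists N.
apply: F_up (F_meet Fx Fc) _ => n /andP[xn hn]; exact: h.
Qed.

Lemma F_not_false : ~ F (fun _ => false).
Proof. by case: hF => -[_ [h _]] _. Qed.

End Filt.

Section Main1.
Variable R : realType.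
Local Open Scope ereal_scope.

Lemma po_fin (s : nat -> R) (hs : prob01 s) A : prod_outer s A \is a fin_num.
Proof.
by rewrite ge0_fin_numE ?po_ge0 // (le_lt_trans (po_le _ (subsetT A))) // (le_lt_trans (po_setT hs)) // ltry.
Qed.

Lemma coupling (p q : nat -> R) (hp : prob01 p) (hq : prob01 q)
  (hp1 : forall n, (p n < 1)%R) (N : nat) (hpq : forall n, (N <= n)%N -> (p n <= q n)%R)
  (F : set (nat -> bool)) (hF : nonprincipal_filter F) :
  prod_outer q F = 0 -> prod_outer p F = 0.
Proof.
move=> hq0.
pose b i := if (i < N)%N then q i else ((q i - p i) / (1 - p i))%R.
pose f i (x y : bool) := if (i < N)%N then y else x || y.
have hb : prob01 b.
  move=> i; rewrite /b; case: ifP => hi; first exact: hq.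
  have h1 : (0 < 1 - p i)%R by rewrite subr_gt0.
  have := hq i; have := hp i; have := hpq i; rewrite leqNgt hi => /(_ isT) hpqi.
  move=> /andP[p0 p1] /andP[q0 q1]; apply/andP; split.
    by rewrite divr_ge0 // subr_ge0.
  by rewrite ler_pdivrMr // mul1r lerD2r.
have hs : forall i, q i = pf (p i) (b i) (f i).
  move=> i; rewrite /pf /f /b /fac; case: ifP => hi /=; first by ring.
  have h1 : (1 - p i != 0)%R by rewrite subr_eq0 eq_sym lt_eqF.
  by field.
have hpush := push hp hb hs F.
have hfub := fub hp hb F setT.
rewrite (po_setT_eq hb) mule1 in hfub.
apply/le_anti/andP; split; last exact: po_ge0.
rewrite -hq0; apply: le_trans hfub _; apply: le_trans _ hpush.
apply: po_le => z [Fz _] /=; apply: (F_tail hF (N := N) Fz) => n hn.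
by rewrite /Phi /f /ev ltnNge hn /= => ->.
Qed.

Lemma prod_null_or (p q : nat -> R) (hp : prob01 p) (hq : prob01 q)
  (F : set (nat -> bool)) (hF : nonprincipal_filter F) :
  prod_outer (fun n => Num.min (p n) (q n)) F = 0 ->
  prod_outer p F = 0 \/ prod_outer q F = 0.
Proof.
move=> hr.
pose f i (x y : bool) := if (p i < q i)%R then x else y.
have hs : forall i, Num.min (p i) (q i) = pf (p i) (q i) (f i).
  move=> i; rewrite minElt /pf /f /fac; case: ifP => _ /=; ring.
have hpush := push hp hq hs F.
have hfub := fub hp hq F F.
have h0 : prod_outer p F * prod_outer q F = 0.
  apply/le_anti/andP; split; last by rewrite mule_ge0 // po_ge0.
  rewrite -hr; apply: le_trans hfub _; apply: le_trans _ hpush.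
  apply: po_le => z [F1 F2] /=.
  apply: (F_up hF (F_meet hF F1 F2)) => n /andP[h1 h2].
  by rewrite /Phi /f; case: ifP.
by move/eqP: h0; rewrite mule_eq0 => /orP[/eqP->|/eqP->]; [left|right].
Qed.

End Main1.

Section Main2.
Variable R : realType.
Local Open Scope ereal_scope.

Lemma null_meas (s : nat -> R) (hs : prob01 s) F :
  prod_outer s F = 0 -> prod_measurable s F.
Proof.
move=> h0 X.
have h1 : prod_outer s (X `&` F) = 0.
  apply/le_anti/andP; split; last exact: po_ge0.
  by rewrite -h0; apply: po_le; exact: subIsetr.
rewrite h1 add0e; apply/le_anti/andP; split.
  apply: le_trans (po_le s (_ : X `<=` (X `&` F) `|` (X `&` ~` F))) _.
    by move=> x Xx; case: (pselect (F x)) => h; [left|right].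
  by apply: le_trans (po_union hs _ _) _; rewrite h1 add0e.
by apply: po_le; exact: subIsetl.
Qed.

Lemma adm01 (s : nat -> R) : admissible s -> prob01 s.
Proof. by move=> h n; have /andP[h1 h2] := h n; apply/andP; split; lra. Qed.

Lemma flip_null (s : nat -> R) (hs : admissible s) F (hF : nonprincipal_filter F) :
  prod_outer s (~` F) = 0 -> prod_outer s F = 0.
Proof.
move=> h0; have hs1 := adm01 hs.
pose a n := (1 - s n)%R.
have ha : prob01 a by move=> n; rewrite /a; have /andP[h1 h2] := hs n; apply/andP; split; lra.
pose f (i : nat) (x y : bool) := ~~ x.
have hpf : forall i, s i = pf (a i) (s i) (f i).
  by move=> i; rewrite /pf /f /a /fac /=; ring.
have hpush := push ha hs1 hpf (~` F).
have hfub := fub ha hs1 F setT.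
rewrite (po_setT_eq hs1) mule1 h0 in hfub hpush.
have haF : prod_outer a F = 0.
  apply/le_anti/andP; split; last exact: po_ge0.
  apply: le_trans hfub _; apply: le_trans _ hpush.
  apply: po_le => z [Fz _] /= hF'.
  apply: (F_not_false hF); apply: (F_up hF (F_meet hF Fz hF')) => n.
  by rewrite /Phi /f /ev; case: (z n.*2).
apply: (coupling hs1 ha _ (N := 0%N) _ hF haF).
  by move=> n; have /andP[h1 h2] := hs n; lra.
by move=> n _; have /andP[h1 h2] := hs n; rewrite /a; lra.
Qed.

End Main2.

Section Main3.
Variable R : realType.
Local Open Scope ereal_scope.
Variable s : nat -> R.
Hypothesis hs : prob01 s.
Variable F : set (nat -> bool).
Hypothesis hF : nonprincipal_filter F.
Hypothesis hm : prod_measurable s F.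

Lemma get_cover (eps : R) : (0 < eps)%R -> exists2 C : nat -> seq bool,
  F `<=` \bigcup_k cyl (C k) &
  \sum_(k <oo) (cyl_weight s (C k))%:E < prod_outer s F + eps%:E.
Proof.
move=> e0.
have := lb_ereal_inf_adherent e0 (po_fin hs F).
by move=> [_ [C hC <-] hlt]; exists C.
Qed.

Lemma get_tail (C : nat -> seq bool) (eps : R) : (0 < eps)%R ->
  \sum_(k <oo) (cyl_weight s (C k))%:E < +oo ->
  exists m, \sum_(m <= k <oo) (cyl_weight s (C k))%:E < eps%:E.
Proof.
move=> e0 hfin.
have h0 : forall k, xpredT k -> 0 <= (cyl_weight s (C k))%:E.
  by move=> k _; have := w_ge0 hs (C k).
have := @nneseries_tail_cvg R (fun k => (cyl_weight s (C k))%:E) xpredT hfin h0.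
move=> /(_ (fun u => u < eps%:E)) [].
  by apply: open_ereal_lt'; rewrite lte_fin.
move=> N _ hN; exists N; exact: (hN N (leqnn N)).
Qed.

Lemma cd_small (eps : R) : (0 < eps)%R ->
  prod_outer s F * prod_outer s (~` F) <= (2 * eps)%:E.
Proof.
move=> e0.
have [C hC hCs] := get_cover e0.
have hfin : \sum_(k <oo) (cyl_weight s (C k))%:E < +oo.
  by apply: (lt_trans hCs); rewrite -(fineK (po_fin hs F)) -EFinD ltry.
have [m hm'] := get_tail e0 hfin.
set U := \bigcup_k cyl (C k).
have hU : prod_outer s (U `&` ~` F) <= eps%:E.
  have := hm U.
  have -> : U `&` F = F by apply/seteqP; split => [x []//|x Fx]; split => //; exact: hC.
  move=> hmU.
  have : prod_outer s F + prod_outer s (U `&` ~` F) <= prod_outer s F + eps%:E.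
    rewrite -hmU; apply: le_trans (ltW hCs); exact: po_cover.
  by rewrite leeD2lE // po_fin.
pose L := (\max_(k < m) size (C k))%N.
pose V := [set x : nat -> bool | exists2 k, (k < m)%N & cyl (C k) x].
have hVdet : detL L V.
  move=> x y hxy [k hk hx]; exists k => // i hi; rewrite -hxy; first exact: hx.
  apply: leq_trans hi _.
  by have := @leq_bigmax _ (fun i : 'I_m => size (C i)) (Ordinal hk).
have hcV : prod_outer s F <= prod_outer s V + eps%:E.
  have hsub : F `<=` V `|` \bigcup_k cyl (C (k + m)%N).
    move=> x /hC [k _ hk]; case: (ltnP k m) => hkm; first by left; exists k.
    by right; exists (k - m)%N => //; rewrite subnK.
  apply: le_trans (po_le s hsub) _; apply: le_trans (po_union hs _ _) _.
  apply: leeD2l; apply: le_trans (po_cover s (c := fun k => C (k + m)%N) _) _ => //.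
  rewrite (@nneseries_addn R (fun k => (cyl_weight s (C k))%:E)); first exact: ltW.
  by move=> k; have := w_ge0 hs (C k).
have hVF : prod_outer s V * prod_outer s (~` F) <= eps%:E.
  pose f (i : nat) (x y : bool) := if (i < L)%N then x else y.
  have hpf : forall i, s i = pf (s i) (s i) (f i).
    by move=> i; rewrite /pf /f /fac; case: ifP => _ /=; ring.
  have hpush := push hs hs hpf (V `&` ~` F).
  have hfub := fub hs hs V (~` F).
  apply: le_trans hfub _; apply: le_trans _ hU; apply: le_trans _ (po_le s (_ : V `&` ~` F `<=` U `&` ~` F)).
    apply: le_trans _ hpush; apply: po_le => z [hv hnf]; split.
      by apply: hVdet hv => i hi; rewrite /Phi /f /ev hi.
    move=> hF'; apply: hnf; apply: (F_tail hF (N := L) hF') => n hn.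
    by rewrite /Phi /f /od ltnNge hn.
  by move=> x [[k _ hk] hnx]; split => //; exists k.
have fF := po_fin hs F; have fV := po_fin hs V; have fnF := po_fin hs (~` F).
have d0 := po_ge0 hs (~` F); have v0 := po_ge0 hs V.
have d1 : prod_outer s (~` F) <= 1.
  by apply: le_trans (po_setT hs); apply: po_le.
move: hcV hVF d0 v0 d1.
rewrite -(fineK fF) -(fineK fV) -(fineK fnF) -!EFinM -EFinD !lee_fin.
move=> h1 h2 h3 h4 h5; nra.
Qed.

End Main3.

Section Main4.
Variable R : realType.
Local Open Scope ereal_scope.

Lemma meas_null (s : nat -> R) (hs : admissible s) F (hF : nonprincipal_filter F) :
  prod_measurable s F -> prod_outer s F = 0.
Proof.
move=> hm; have hs1 := adm01 hs.
have cd0 : prod_outer s F * prod_outer s (~` F) = 0.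
  apply/le_anti/andP; split; last by rewrite mule_ge0 // po_ge0.
  apply/lee_addgt0Pr => e e0; rewrite add0e.
  have e2 : (0 < e / 2)%R by rewrite divr_gt0.
  apply: le_trans (cd_small hs1 hF hm e2) _.
  by rewrite lee_fin; lra.
move/eqP: cd0; rewrite mule_eq0 => /orP[/eqP //|/eqP h].
exact: flip_null.
Qed.

End Main4.

Unset Implicit Arguments.
Theorem theorem1p3 (R : realType) (F : set (nat -> bool))
  (hF : nonprincipal_filter F) :
  (forall p q : nat -> R, admissible p -> admissible q ->
     (exists N, forall n, (N <= n)%N -> p n <= q n) ->
     prod_null q F -> prod_null p F)
  /\
  (forall p q : nat -> R, admissible p -> admissible q ->
     ~ prod_measurable p F -> ~ prod_measurable q F ->
     ~ prod_measurable (fun n => Num.min (p n) (q n)) F).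
Proof.
split.
  move=> p q hp hq [N hN] hq0.
  apply: (coupling (adm01 hp) (adm01 hq) _ (N:=N) hN hF hq0).
  by move=> n; have /andP[h1 h2] := hp n; lra.
move=> p q hp hq hnp hnq hmr.
have hr : admissible (fun n => Num.min (p n) (q n)).
  move=> n; have /andP[p1 p2] := hp n; have /andP[q1 q2] := hq n.
  by rewrite minElt; case: ifP => _; apply/andP; split.
have := meas_null hr hF hmr.
case/(prod_null_or (adm01 hp) (adm01 hq) hF) => h.
  by apply: hnp; exact: (null_meas (adm01 hp) h).
by apply: hnq; exact: (null_meas (adm01 hq) h).
Qed.
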